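(* Let $M^n$ be a hypersurface isometrically immersed in an $(n+1)$-dimensional Riemannian manifold $\overline{M}^{n+1}$, with Levi-Civita connection $\nabla$ on $M$ and shape operator $A$. Let $\mu_1: M \to \mathbb{R}$ be a smooth function and let $k \geq 1$ be an integer. Then for every point $p\in M$ and every tangent vector $v \in T_pM$, $$\operatorname{tr}\left( T_{k-1}^{\infty}(\mu_1,A)\circ \nabla_v A\right) = \left\langle \nabla \sigma_k^{\infty}(\mu_1,A) - \sigma_{k-1}^{\infty}(\mu_1,A)\,\nabla \mu_1 ,\, v\right\rangle .$$
   Context: The shape operator is $AX = -(\overline{\nabla}_X N)^{\top}$, where $N$ is a unit normal field along $M$, $\overline{\nabla}$ is the Levi-Civita connection of $\overline{M}$, and $\top$ denotes orthogonal projection onto $TM$; $A$ is self-adjoint with eigenvalues (principal curvatures) $\lambda_1,\dots,\lambda_n$. For $m\ge 0$, $\sigma_m(A)=\sigma_m(\lambda_1,\dots,\lambda_n)$ is the $m$-th elementary symmetric function of the eigenvalues ($\sigma_0=1$, $\sigma_m = 0$ for $m<0$). The weighted elementary symmetric functions are $\sigma_m^{\infty}(\mu_1,A) = \sum_{j=0}^{m} \frac{\mu_1^j}{j!}\,\sigma_{m-j}(A)$ (this agrees with Case's recursive definition of $\sigma_m^\infty$), viewed as a smooth function $p\mapsto \sigma_m^{\infty}(\mu_1(p),A_p)$ on $M$, and $\nabla \sigma_m^\infty(\mu_1,A)$ denotes its gradient on $M$. The weighted Newton transformations are $T_{m}^{\infty}(\mu_1,A) = \sum_{j=0}^{m} (-1)^j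 \sigma_{m-j}^{\infty}(\mu_1,A)\, A^j$, equivalently $T_0^\infty = I$ and $T_m^\infty = \sigma_m^\infty(\mu_1,A) I - A T_{m-1}^\infty$ for $m\ge1$. Here $\nabla_v A$ is the covariant derivative of the $(1,1)$-tensor $A$ in direction $v$. *)

(* Defs.v *)
(* Local-coordinate (chart) model of M^n. *)
From HB Require Import structures.
From mathcomp Require Import all_boot all_order all_algebra.
From mathcomp Require Import all_classical all_reals all_analysis.
Set Implicit Arguments. Unset Strict Implicit. Unset Printing Implicit Defensive.
Import Order.TTheory GRing.Theory Num.Theory.
Import numFieldNormedType.Exports.
Local Open Scope classical_set_scope.
Local Open Scope ring_scope.

Section Defs.
Variables (R : realType) (n : nat).

(* Points of the chart domain and tangent vectors (coordinate components). *)
Notation V := 'cV[R]_n.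

Definition coordvec (i : 'I_n) : V := delta_mx i 0.

(* sigma_m(A): m-th elementary symmetric function of the eigenvalues of A
   (with multiplicity), i.e. (-1)^m times the coefficient of X^(n-m) of the
   characteristic polynomial; sigma_m = 0 for m > n. *)
Definition sigma (m : nat) (A : 'M[R]_n) : R :=
  if (m <= n)%N then (-1) ^+ m * (char_poly A)`_(n - m) else 0.

Definition sigmaInf (m : nat) (mu : R) (A : 'M[R]_n) : R :=
  \sum_(j < m.+1) (mu ^+ j / (j`!)%:R) * sigma (m - j) A.

Definition Tinf (m : nat) (mu : R) (A : 'M[R]_n) : 'M[R]_n :=
  \sum_(j < m.+1) ((-1) ^+ j * sigmaInf (m - j) mu A) *: A ^+ j.

(* Riemannian metric g (matrix g_ij at each point).  Christoffel symbols of
   its Levi-Civita connection: Gamma k i j = Gamma^k_{ij}. *)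
Definition christoffel (g : V -> 'M[R]_n) (x : V) (k i j : 'I_n) : R :=
  2^-1 * \sum_(l < n) (invmx (g x)) k l *
     ('D_(coordvec i) (fun y => g y j l) x
      + 'D_(coordvec j) (fun y => g y i l) x
      - 'D_(coordvec l) (fun y => g y i j) x).

(* Covariant derivative nabla_v A of a (1,1)-tensor field A (A x k j = A^k_j):
   (nabla_v A)^k_j = v(A^k_j) + Gamma^k_{il} v^i A^l_j - Gamma^l_{ij} v^i A^k_l *)
Definition covD (g : V -> 'M[R]_n) (A : V -> 'M[R]_n) (v : V) (x : V)
  : 'M[R]_n :=
  \matrix_(k < n, j < n)
    ('D_v (fun y => A y k j) x
     + \sum_(i < n) \sum_(l < n) christoffel g x k i l * v i 0 * A x l j
     - \sum_(i < n) \sum_(l < n) christoffel g x l i j * v i 0 * A x k l).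

Definition inner (g : V -> 'M[R]_n) (x : V) (u w : V) : R :=
  (u^T *m g x *m w) 0 0.

Definition grad (g : V -> 'M[R]_n) (f : V -> R) (x : V) : V :=
  invmx (g x) *m \col_(l < n) 'D_(coordvec l) f x.

End Defs.

(* Main.v *)
Require Import Defs.
From HB Require Import structures.
From mathcomp Require Import all_boot all_order all_algebra.
From mathcomp Require Import all_classical all_reals all_analysis.
Import Order.TTheory GRing.Theory Num.Theory.
Import numFieldNormedType.Exports.
Local Open Scope classical_set_scope.
Local Open Scope ring_scope.
From mathcomp Require Import all_fingroup.
From mathcomp Require Import ring.
From mathcomp Require Import zify.
Import Order.TTheory GRing.Theory Num.Theory.
Import numFieldNormedType.Exports.
Local Open Scope ring_scope.

Module Helpers.
Set Implicit Arguments. Unset Strict Implicit. Unset Printing Implicit Defensive.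

Section DPcalc.
Variables (R : realType) (n : nat) (p v : 'cV[R]_n).

Definition DP (f : 'cV[R]_n -> R) (d : R) :=
  differentiable f p /\ 'D_v f p = d.

Lemma DP_ext {f g d} : DP f d -> (forall x, f x = g x) -> DP g d.
Proof. by move=> + e; have -> : g = f by apply/funext=> x; rewrite e. Qed.

Lemma DP_eqv {f d d'} : DP f d -> d = d' -> DP f d'.
Proof. by move=> H <-. Qed.

Lemma PDP_eqv_dummy : True. Proof. by []. Qed.

Lemma DP_cst c : DP (fun _ => c) 0.
Proof. split; first exact: differentiable_cst. exact: (derive_cst c). Qed.

Lemma DP_add f g a b : DP f a -> DP g b -> DP (fun x => f x + g x) (a + b).
Proof.
move=> [df Df] [dg Dg]; split; first exact: (differentiableD df dg).
rewrite (_ : (fun x => f x + g x) = f + g) //.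
by rewrite deriveD ?Df ?Dg //; apply: diff_derivable.
Qed.

Lemma DP_opp f a : DP f a -> DP (fun x => - f x) (- a).
Proof.
move=> [df Df]; split; first exact: (differentiableN df).
rewrite (_ : (fun x => - f x) = - f) //.
by rewrite deriveN ?Df //; apply: diff_derivable.
Qed.

Lemma DP_mul f g a b : DP f a -> DP g b ->
  DP (fun x => f x * g x) (f p * b + g p * a).
Proof.
move=> [df Df] [dg Dg]; split; first exact: (differentiableM df dg).
rewrite (_ : (fun x => f x * g x) = f * g) //.
by rewrite deriveM ?Df ?Dg //; apply: diff_derivable.
Qed.

Lemma DP_big (I : Type) (r : seq I) (P : pred I) (F : I -> 'cV[R]_n -> R) d :
  (forall i, DP (F i) (d i)) ->
  DP (fun x => \sum_(i <- r | P i) F i x) (\sum_(i <- r | P i) d i).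
Proof.
move=> H; elim: r => [|i r IH].
  rewrite big_nil. eapply DP_ext; first exact: (DP_cst 0). by move=> x; rewrite big_nil.
rewrite big_cons; case Pi: (P i).
  by eapply DP_ext; [exact: (DP_add (H i) IH)|] => x; rewrite big_cons Pi.
by eapply DP_ext; [exact: IH|] => x; rewrite big_cons Pi.
Qed.

Definition PDP (f : 'cV[R]_n -> {poly R}) (d : {poly R}) :=
  forall i, DP (fun x => (f x)`_i) d`_i.

Lemma PDP_ext {f g d} : PDP f d -> (forall x, f x = g x) -> PDP g d.
Proof. by move=> H e i; eapply DP_ext; [exact: (H i)|] => x /=; rewrite e. Qed.

Lemma PDP_eqv {f d d'} : PDP f d -> d = d' -> PDP f d'.
Proof. by move=> H <-. Qed.

Lemma PDP_cst c : PDP (fun _ => c) 0.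
Proof. by move=> i; rewrite coef0; apply: DP_cst. Qed.

Lemma PDP_add f g a b : PDP f a -> PDP g b -> PDP (fun x => f x + g x) (a + b).
Proof.
by move=> Hf Hg i; rewrite coefD; eapply DP_ext; [exact: (DP_add (Hf i) (Hg i))|] => x; rewrite coefD.
Qed.

Lemma PDP_opp f a : PDP f a -> PDP (fun x => - f x) (- a).
Proof.
by move=> Hf i; rewrite coefN; eapply DP_ext; [exact: (DP_opp (Hf i))|] => x; rewrite coefN.
Qed.

Lemma PDP_mul f g a b : PDP f a -> PDP g b ->
  PDP (fun x => f x * g x) (f p * b + a * g p).
Proof.
move=> Hf Hg i.
have H := @DP_big _ (index_enum 'I_i.+1) xpredT
  (fun j x => (f x)`_j * (g x)`_(i - j))
  (fun j => (f p)`_j * b`_(i - j) + (g p)`_(i - j) * a`_j)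
  (fun j => DP_mul (Hf j) (Hg (i - j)%N)).
have -> : (f p * b + a * g p)`_i = \sum_(j <- index_enum 'I_i.+1 | xpredT j)
   ((f p)`_j * b`_(i - j) + (g p)`_(i - j) * a`_j).
  rewrite coefD !coefM -big_split /=; apply: eq_bigr => j _.
  by rewrite (mulrC _ a`_j).
by eapply DP_ext; [exact: H|] => x; rewrite coefM.
Qed.

Lemma PDP_big (I : Type) (r : seq I) (P : pred I) (F : I -> 'cV[R]_n -> {poly R}) d :
  (forall i, PDP (F i) (d i)) ->
  PDP (fun x => \sum_(i <- r | P i) F i x) (\sum_(i <- r | P i) d i).
Proof.
move=> H; elim: r => [|i r IH].
  by rewrite big_nil; eapply PDP_ext; [exact: (PDP_cst 0)|] => x; rewrite big_nil.
rewrite big_cons; case Pi: (P i).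
  by eapply PDP_ext; [exact: (PDP_add (H i) IH)|] => x; rewrite big_cons Pi.
by eapply PDP_ext; [exact: IH|] => x; rewrite big_cons Pi.
Qed.

Lemma prod_neq_notin (I : eqType) (T : comPzRingType) (r : seq I) i (G : I -> T) :
  i \notin r -> \prod_(j <- r | j != i) G j = \prod_(j <- r) G j.
Proof.
elim: r => [|k r IH]; first by rewrite !big_nil.
rewrite in_cons negb_or => /andP[ki ir].
by rewrite !big_cons eq_sym ki IH.
Qed.

Lemma dprod_cons (I : eqType) (T : comPzRingType) (r : seq I) i (G : I -> T) d :
  i \notin r ->
  \sum_(k <- i :: r) d k * \prod_(j <- i :: r | j != k) G j =
  d i * \prod_(j <- r) G j + G i * \sum_(k <- r) d k * \prod_(j <- r | j != k) G j.
Proof.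
move=> ir; rewrite big_cons big_cons eqxx /= prod_neq_notin //; congr (_ + _).
rewrite mulr_sumr big_seq [RHS]big_seq; apply: eq_bigr => k kr.
rewrite big_cons; have -> : (i != k) by apply: contraNneq ir => ->.
by rewrite mulrCA.
Qed.

Lemma PDP_prod (I : eqType) (r : seq I) (F : I -> 'cV[R]_n -> {poly R}) d :
  uniq r -> (forall i, PDP (F i) (d i)) ->
  PDP (fun x => \prod_(i <- r) F i x)
      (\sum_(i <- r) d i * \prod_(j <- r | j != i) F j p).
Proof.
move=> + H; elim: r => [|i r IH] /=.
  by move=> _; rewrite big_nil; eapply PDP_ext; [exact: (PDP_cst 1)|] => x; rewrite big_nil.
move=> /andP[ir ur]; rewrite dprod_cons //.
eapply PDP_ext; [|by move=> x; rewrite big_cons].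
by rewrite addrC; exact: (PDP_mul (H i) (IH ur)).
Qed.

End DPcalc.
Arguments DP_cst {R n p v} c. Arguments PDP_cst {R n p v} c.


Section Alg.
Variables (R : realType) (n : nat).

Definition Tn m (M : 'M[R]_n) : 'M[R]_n :=
  \sum_(i < m.+1) ((-1) ^+ i * sigma (m - i) M) *: M ^+ i.

Lemma cp_n (M : 'M[R]_n) : (char_poly M)`_n = 1.
Proof.
have := char_poly_monic M; rewrite monicE lead_coefE size_char_poly /=.
by move/eqP.
Qed.

Lemma sigma0 (M : 'M[R]_n) : sigma 0 M = 1.
Proof. by rewrite /sigma leq0n expr0 mul1r subn0 cp_n. Qed.

Lemma sigma_gt m (M : 'M[R]_n) : (n < m)%N -> sigma m M = 0.
Proof. by rewrite /sigma ltnNge => /negbTE ->. Qed.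

Lemma Tn0 M : Tn 0 M = 1.
Proof. by rewrite /Tn big_ord_recl big_ord0 addr0 expr0 mul1r subn0 sigma0 scale1r. Qed.

Lemma TnS m M : Tn m.+1 M = sigma m.+1 M *: 1%:M - M *m Tn m M.
Proof.
rewrite /Tn big_ord_recl expr0 mul1r subn0; congr (_ + _).
rewrite mulmx_sumr -sumrN; apply: eq_bigr => i _.
by rewrite lift0 subSS exprS mulN1r mulNr scaleNr -scalemxAr mulmxE -exprS.
Qed.

End Alg.

Lemma Tn_n (R : realType) (n : nat) (M : 'M[R]_n) : Tn n M = 0.
Proof.
case: n M => [|n'] M; first exact: flatmx0.
have hx : forall q : {poly R}, horner_mx M q = \sum_(i < size q) q`_i *: M ^+ i.
  move=> q; rewrite -{1}(coefK q) poly_def rmorph_sum; apply: eq_bigr => i _.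
  by rewrite -[LHS]/(horner_mx M (q`_i *: 'X^i)) horner_mxZ rmorphXn /= horner_mx_X.
have := Cayley_Hamilton M; rewrite hx size_char_poly => H.
have -> : Tn n'.+1 M = (-1) ^+ n'.+1 *: \sum_(i < n'.+2) (char_poly M)`_i *: M ^+ i.
  rewrite /Tn scaler_sumr; apply: eq_bigr => i _.
  have hi : (i <= n'.+1)%N by rewrite -ltnS.
  by rewrite /sigma leq_subr subKn // mulrA -exprD subnKC // scalerA.
by rewrite H scaler0.
Qed.

Lemma Tn_ge (R : realType) (n : nat) m (M : 'M[R]_n) : (n <= m)%N -> Tn m M = 0.
Proof.
move=> h; rewrite -(subnKC h); elim: (m - n)%N => [|k IH]; first by rewrite addn0 Tn_n.
rewrite addnS TnS IH mulmx0 subr0 sigma_gt ?scale0r //; lia.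
Qed.

Lemma sign_sq (R : realType) i : (-1) ^+ i * (-1) ^+ i = 1 :> R.
Proof. by rewrite -exprMn mulrNN mulr1 expr1n. Qed.

Lemma char_expand (R : realType) (n : nat) (M : 'M[R]_n) :
  char_poly M = 'X^n - \sum_(m < n) 'X^(n - m.+1) * ((-1) ^+ m * sigma m.+1 M)%:P.
Proof.
rewrite -{1}(coefK (char_poly M)) poly_def size_char_poly big_ord_recr /= cp_n scale1r addrC.
congr (_ + _).
rewrite -sumrN (reindex_inj rev_ord_inj) /=; apply: eq_bigr => i _.
have hi : (i.+1 <= n)%N by [].
rewrite /sigma hi exprS mulN1r mulNr mulrN mulrA sign_sq mul1r polyCN mulrN opprK.
by rewrite -mul_polyC mulrC.
Qed.

Lemma adj_cp (R : realType) (n : nat) (M : 'M[R]_n) :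
  \adj (char_poly_mx M) =
  \sum_(m < n) 'X^(n - m.+1) *: map_mx polyC ((-1) ^+ m *: Tn m M).
Proof.
set S := (X in _ = X); set N := char_poly_mx M.
pose P m := map_mx (@polyC R) ((-1) ^+ m *: Tn m M).
have KF : forall m, M *m ((-1) ^+ m *: Tn m M) =
    ((-1) ^+ m * sigma m.+1 M) *: 1%:M + (-1) ^+ m.+1 *: Tn m.+1 M.
  move=> m; rewrite TnS exprS mulN1r scaleNr scalerBr scalerA opprB addrC subrK.
  by rewrite -scalemxAr.
have NS : N *m S = (char_poly M)%:M.
  rewrite /S mulmx_sumr.
  rewrite (eq_bigr (fun m : 'I_n => ('X^(n - m) *: P m - 'X^(n - m.+1) *: P m.+1)
        - ('X^(n - m.+1) * ((-1) ^+ m * sigma m.+1 M)%:P) *: 1%:M)); last first.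
    move=> m _; rewrite -scalemxAr /N /char_poly_mx mulmxBl mul_scalar_mx -map_mxM KF.
    rewrite map_mxD scalemx1 map_scalar_mx /= -scalemx1 scalerBr scalerDr !scalerA.
    have -> : 'X^(n - m.+1) * 'X = 'X^(n - m) :> {poly R}.
      by rewrite -exprSr subnSK.
    by rewrite /P opprD addrA addrAC.
  rewrite sumrB -(big_mkord xpredT (fun m => 'X^(n - m) *: P m - 'X^(n - m.+1) *: P m.+1)).
  rewrite (eq_bigr (fun m => - ('X^(n - m.+1) *: P m.+1 - 'X^(n - m) *: P m))); last first.
    by move=> m _; rewrite opprB.
  rewrite sumrN.
  rewrite telescope_sumr // subnn expr0 scale1r /P Tn_n scaler0 map_mx0 sub0r opprK.
  rewrite subn0 expr0 scale1r Tn0 map_mx1 -scaler_suml -scalerBl -char_expand.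
  by rewrite scalemx1.
have h := congr1 (mulmx (\adj N)) NS.
rewrite mulmxA mul_adj_mx mul_mx_scalar mul_scalar_mx in h.
apply/matrixP => i j; move/matrixP: h => /(_ i j); rewrite !mxE => h'.
by apply: (mulfI (monic_neq0 (char_poly_monic M))); rewrite -h'.
Qed.

Lemma det_deriv_alg (T : comPzRingType) (n : nat) (N H : 'M[T]_n) :
  \sum_(s : 'S_n) (-1) ^+ s *
     \sum_(i <- index_enum 'I_n) (H i (s i) * \prod_(j <- index_enum 'I_n | j != i) N j (s j))
  = \sum_i \sum_j H i j * cofactor N i j.
Proof.
rewrite (eq_bigr (fun s : 'S_n => \sum_(i <- index_enum 'I_n) (-1) ^+ s *
     (H i (s i) * \prod_(j <- index_enum 'I_n | j != i) N j (s j)))); last first.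
  by move=> s _; rewrite mulr_sumr.
rewrite exchange_big /=; apply: eq_bigr => i _.
pose Ri := \matrix_(a, b) if a == i then H a b else N a b.
have -> : \sum_j H i j * cofactor N i j = \det Ri.
  rewrite (expand_det_row Ri i); apply: eq_bigr => j _.
  rewrite mxE eqxx; congr (_ * _); rewrite /cofactor; congr (_ * \det _).
  apply/matrixP => a b; rewrite !mxE.
  by rewrite eq_sym (negbTE (neq_lift i a)).
rewrite /determinant; apply: eq_bigr => s _; congr (_ * _).
rewrite [RHS](bigD1 i) //= /Ri mxE eqxx; congr (_ * _).
by apply: eq_bigr => j /negbTE ji; rewrite mxE ji.
Qed.


Section Deriv.
Variables (R : realType) (n : nat) (p v : 'cV[R]_n) (A : 'cV[R]_n -> 'M[R]_n).
Hypothesis dA : differentiable A p.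

Definition Bm : 'M[R]_n := \matrix_(i, j) 'D_v (fun y => A y i j) p.

Lemma DP_entry i j : DP p v (fun x => A x i j) (Bm i j).
Proof.
split; last by rewrite mxE.
exact: (differentiable_comp dA (differentiable_coord (A p) i j)).
Qed.

Lemma PDP_cpmx i j : PDP p v (fun x => char_poly_mx (A x) i j) (- (Bm i j)%:P).
Proof.
move=> l.
have E : forall x, (char_poly_mx (A x) i j)`_l =
   ((l == 1)%:R *+ (i == j)) - (if l == 0 then A x i j else 0).
  by move=> x; rewrite /char_poly_mx !mxE coefB coefMn coefX coefC.
rewrite (_ : (fun x => _) = fun x => ((l == 1)%:R *+ (i == j)) - (if l == 0 then A x i j else 0)); last by apply/funext => x; rewrite E.
rewrite coefN coefC; case: (l == 0) => /=.
  by eapply DP_eqv; [apply: (DP_add (DP_cst _) (DP_opp (DP_entry i j)))|rewrite add0r].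
by eapply DP_eqv; [apply: (DP_add (DP_cst _) (DP_opp (DP_cst 0)))|rewrite add0r oppr0].
Qed.

Lemma PDP_cp : PDP p v (fun x => char_poly (A x))
  (- \sum_i \sum_j (Bm i j)%:P * cofactor (char_poly_mx (A p)) i j).
Proof.
pose Hm := \matrix_(i, j) - (Bm i j)%:P : 'M[{poly R}]_n.
have K : PDP p v (fun x => \sum_(s <- index_enum {perm 'I_n})
     (-1) ^+ s * \prod_(i <- index_enum 'I_n) char_poly_mx (A x) i (s i))
  (\sum_(s <- index_enum {perm 'I_n}) (-1) ^+ s *
     \sum_(i <- index_enum 'I_n) (Hm i (s i) *
        \prod_(j <- index_enum 'I_n | j != i) char_poly_mx (A p) j (s j))).
  apply: PDP_big => s.
  eapply PDP_eqv.
    exact: (PDP_mul (PDP_cst _) (PDP_prod (index_enum_uniq _) (fun i => PDP_cpmx i (s i)))).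
  rewrite /= mul0r addr0; congr (_ * _); apply: eq_bigr => i _; by rewrite /Hm [in RHS]mxE.
apply: (PDP_eqv K).
rewrite (det_deriv_alg (char_poly_mx (A p)) Hm) -sumrN; apply: eq_bigr => i _.
by rewrite -sumrN; apply: eq_bigr => j _; rewrite mxE mulNr.
Qed.

Lemma adj_coef (M : 'M[R]_n) i j m : (m < n)%N ->
  ((\adj (char_poly_mx M)) j i)`_(n - m.+1) = ((-1) ^+ m *: Tn m M) j i.
Proof.
move=> hm; rewrite adj_cp summxE coef_sum (bigD1 (Ordinal hm)) //= big1 ?addr0.
  by rewrite !mxE coefXnM ltnn subnn coefC.
move=> k kn; rewrite !mxE coefXnM.
have km : (k : nat) != m by apply: contra kn => /eqP e; apply/eqP/val_inj.
case: ifP => // h; rewrite coefC; case: eqP => // e.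
have kn' := ltn_ord k; exfalso; move: h e km; lia.
Qed.

Definition dsig m := if m is m'.+1 then \tr (Tn m' (A p) *m Bm) else 0.

Lemma DP_sigma m : DP p v (fun x => sigma m (A x)) (dsig m).
Proof.
case: m => [|m] /=.
  by eapply DP_ext; [exact: (DP_cst 1) | move=> x /=; rewrite sigma0].
case: (leqP m.+1 n) => hm; last first.
  rewrite Tn_ge; last by lia.
  rewrite mul0mx mxtrace0.
  by eapply DP_ext; [exact: (DP_cst 0) | move=> x /=; rewrite sigma_gt].
have E : forall x, sigma m.+1 (A x) = (-1) ^+ m.+1 * (char_poly (A x))`_(n - m.+1).
  by move=> x; rewrite /sigma hm.
have K := DP_mul (DP_cst ((-1) ^+ m.+1)) (PDP_cp (n - m.+1)%N).
move: K; rewrite /= mulr0 addr0 => K.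
eapply DP_ext; last by move=> x; rewrite /= E.
apply: (DP_eqv K).
rewrite coefN !coef_sum.
rewrite (eq_bigr (fun i => (-1) ^+ m * \sum_j Bm i j * Tn m (A p) j i)); last first.
  move=> i _; rewrite coef_sum mulr_sumr; apply: eq_bigr => j _.
  rewrite coefCM (_ : cofactor _ i j = (\adj (char_poly_mx (A p))) j i); last by rewrite mxE.
  by rewrite adj_coef // [X in _ * X]mxE mulrCA.
rewrite -mulr_sumr exprS mulN1r mulNr mulrN opprK mulrA sign_sq mul1r.
rewrite /mxtrace exchange_big /=; apply: eq_bigr => i _; rewrite mxE.
by apply: eq_bigr => j _; rewrite mulrC.
Qed.

End Deriv.


Lemma DP_pow (R : realType) (n : nat) (p v : 'cV[R]_n) f a j :
  DP p v f a -> DP p v (fun x => f x ^+ j) (j%:R * f p ^+ j.-1 * a).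
Proof.
move=> H; elim: j => [|j IH].
  by eapply DP_eqv; [eapply DP_ext; [exact: (DP_cst 1)| by move=> x; rewrite expr0] | rewrite !mul0r].
eapply DP_eqv; first by eapply DP_ext; [exact: (DP_mul H IH) | by move=> x; rewrite exprS].
case: j {IH} => [|j] /=; first by rewrite !mul0r mulr0 add0r expr0 !mul1r.
rewrite exprS -[(j.+2)%:R]natr1 -[(j.+1)%:R]natr1; ring.
Qed.

Lemma tri_exch (V : nmodType) m (F : nat -> nat -> V) :
  \sum_(i < m.+1) \sum_(j < (m - i).+1) F i j =
  \sum_(j < m.+1) \sum_(i < (m - j).+1) F i j.
Proof.
have W : forall (G : nat -> nat -> V), \sum_(i < m.+1) \sum_(j < (m - i).+1) G i j =
    \sum_(i < m.+1) \sum_(j < m.+1) (if (i + j <= m)%N then G i j else 0).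
  move=> G; apply: eq_bigr => i _.
  rewrite (big_ord_widen m.+1 (G i)) ?ltnS ?leq_subr // big_mkcond.
  apply: eq_bigr => j _; have := ltn_ord i.
  by case: (ltnP j (m - i).+1); case: (leqP (i + j) m) => //; lia.
rewrite W exchange_big /= (W (fun j i => F i j)); apply: eq_bigr => j _.
by apply: eq_bigr => i _; rewrite addnC.
Qed.

Lemma Tinf_split (R : realType) (n : nat) m (mu : R) (M : 'M[R]_n) :
  Tinf m mu M = \sum_(j < m.+1) (mu ^+ j / (j`!)%:R) *: Tn (m - j) M.
Proof.
rewrite /Tinf /sigmaInf /Tn.
rewrite (eq_bigr (fun i : 'I_m.+1 => \sum_(j < (m - i).+1)
   ((-1) ^+ i * (mu ^+ j / (j`!)%:R * sigma (m - i - j) M)) *: M ^+ i)); last first.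
  by move=> i _; rewrite mulr_sumr scaler_suml.
rewrite (@tri_exch _ m (fun i j => ((-1) ^+ i * (mu ^+ j / (j`!)%:R * sigma (m - i - j) M)) *: M ^+ i)).
apply: eq_bigr => j _; rewrite scaler_sumr; apply: eq_bigr => i _.
by rewrite scalerA mulrCA subnAC.
Qed.

Section Weighted.
Variables (R : realType) (n : nat) (p v : 'cV[R]_n) (A : 'cV[R]_n -> 'M[R]_n).
Variables (mu : 'cV[R]_n -> R) (Dmu : R).
Hypothesis dA : differentiable A p.
Hypothesis Hmu : DP p v mu Dmu.

Lemma DP_sigmaInf k : DP p v (fun x => sigmaInf k.+1 (mu x) (A x))
  (sigmaInf k (mu p) (A p) * Dmu + \tr (Tinf k (mu p) (A p) *m Bm p v A)).
Proof.
have K := @DP_big _ _ p v _ (index_enum 'I_k.+2) xpredT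
  (fun j x => (mu x ^+ j / (j`!)%:R) * sigma (k.+1 - j) (A x)) _
  (fun j => DP_mul (DP_mul (DP_pow j Hmu) (DP_cst (j`!)%:R^-1)) (DP_sigma v dA (k.+1 - j))).
apply: (DP_eqv K) => /=.
rewrite big_split /= addrC; congr (_ + _).
  rewrite big_ord_recl /= !mulr0 !mul0r !add0r mulr0 /sigmaInf mulr_suml.
  rewrite !mulr0 !add0r; apply: eq_bigr => i _; rewrite /bump /= add1n subSS factS natrM.
  have h1 : (i.+1)%:R != 0 :> R by rewrite pnatr_eq0.
  have h2 : (i`!)%:R != 0 :> R by rewrite pnatr_eq0 -lt0n fact_gt0.
  rewrite add0n mulr0 add0r invfM; field; rewrite h2 /= addrC natr1; exact: h1.
rewrite big_ord_recr /= subnn /= mulr0 addr0.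
rewrite Tinf_split mulmx_suml raddf_sum; apply: eq_bigr => i _.
have hi : (i <= k)%N by rewrite -ltnS.
by rewrite /= subSn //= -scalemxAl mxtraceZ.
Qed.
End Weighted.


Lemma D_lin (R : realType) (n : nat) (f : 'cV[R]_n -> R) (p v : 'cV[R]_n) :
  differentiable f p -> \sum_l 'D_(coordvec R l) f p * v l 0 = 'D_v f p.
Proof.
move=> df.
have vE : v = \sum_l v l 0 *: coordvec R l.
  rewrite {1}(matrix_sum_delta v); apply: eq_bigr => l _; by rewrite big_ord1.
rewrite (@deriveE _ _ _ f p v df) [in RHS]vE linear_sum; apply: eq_bigr => l _.
by rewrite linearZ /= (@deriveE _ _ _ f p _ df) mulrC.
Qed.

Lemma inner_grad (R : realType) (n : nat) (g : 'cV[R]_n -> 'M[R]_n) (p v : 'cV[R]_n)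
  (f1 f2 : 'cV[R]_n -> R) (s : R) :
  (g p)^T = g p ->
  (forall u : 'cV[R]_n, u != 0 -> 0 < (u^T *m g p *m u) 0 0) ->
  differentiable f1 p -> differentiable f2 p ->
  inner g p (grad g f1 p - s *: grad g f2 p) v = 'D_v f1 p - s * 'D_v f2 p.
Proof.
move=> gT gpos d1 d2.
have gU : g p \in unitmx.
  rewrite unitmxE unitfE; apply/negP => /det0P[w w0 wg].
  have := gpos w^T; rewrite trmx_eq0 => /(_ w0).
  by rewrite trmxK wg mul0mx mxE ltxx.
rewrite /inner /grad scalemxAr -mulmxBr trmx_mul trmx_inv gT -mulmxA.
rewrite mulmxA -[X in (X *m v)]mulmxA mulVmx // mulmx1 mxE.
rewrite -(D_lin v d1) -(D_lin v d2) mulr_sumr -sumrB; apply: eq_bigr => l _.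
by rewrite !mxE mulrBl mulrA.
Qed.

Lemma covD_eq (R : realType) (n : nat) (g : 'cV[R]_n -> 'M[R]_n)
  (A : 'cV[R]_n -> 'M[R]_n) (v p : 'cV[R]_n) :
  covD g A v p = Bm p v A
    + (\matrix_(k, l) \sum_i christoffel g p k i l * v i 0) *m A p
    - A p *m (\matrix_(k, l) \sum_i christoffel g p k i l * v i 0).
Proof.
apply/matrixP => k j; rewrite !mxE; congr (_ + _ - _).
  rewrite exchange_big /=; apply: eq_bigr => l _; rewrite mxE mulr_suml.
  by apply: eq_bigr.
rewrite exchange_big /=; apply: eq_bigr => l _; rewrite mxE mulr_sumr.
by apply: eq_bigr => i _; rewrite mulrC.
Qed.

Lemma tr_comm (R : realType) (n : nat) (T A G B : 'M[R]_n) :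
  A *m T = T *m A -> \tr (T *m (B + G *m A - A *m G)) = \tr (T *m B).
Proof.
move=> AT; rewrite mulmxBr mulmxDr !mxtraceD raddfN /=.
have E : \tr (T *m (G *m A)) = \tr (T *m (A *m G)) by rewrite [LHS]mxtrace_mulC -mulmxA AT [LHS]mxtrace_mulC -mulmxA.
by rewrite E addrK.
Qed.

Lemma Tinf_comm (R : realType) (n : nat) m mu (M : 'M[R]_n) :
  M *m Tinf m mu M = Tinf m mu M *m M.
Proof.
rewrite /Tinf mulmx_sumr mulmx_suml; apply: eq_bigr => i _.
by rewrite -scalemxAr -scalemxAl mulmxE -exprS -exprSr.
Qed.

End Helpers.
Import Helpers.

Theorem mainTheorem1 (R : realType) (n : nat) (U : set 'cV[R]_n)
  (g : 'cV[R]_n -> 'M[R]_n) (A : 'cV[R]_n -> 'M[R]_n) (mu1 : 'cV[R]_n -> R)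
  (k : nat) :
  open U ->
  (* g is a Riemannian metric on U: symmetric, positive definite, smooth *)
  (forall x, U x -> (g x)^T = g x) ->
  (forall x, U x -> forall u : 'cV[R]_n, u != 0 -> 0 < (u^T *m g x *m u) 0 0) ->
  (forall x, U x -> differentiable g x) ->
  (* A is a smooth (1,1)-tensor field, self-adjoint w.r.t. g *)
  (forall x, U x -> (g x *m A x)^T = g x *m A x) ->
  (forall x, U x -> differentiable A x) ->
  (* mu1 is a smooth function *)
  (forall x, U x -> differentiable mu1 x) ->
  (1 <= k)%N ->
  forall (p : 'cV[R]_n), U p -> forall v : 'cV[R]_n,
    \tr (Tinf (k - 1) (mu1 p) (A p) *m covD g A v p)
    = inner g p (grad g (fun x => sigmaInf k (mu1 x) (A x)) p
                 - sigmaInf (k - 1) (mu1 p) (A p) *: grad g mu1 p) v.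
Proof.
move=> _ gT gpos _ _ HAd Hmud hk p Up v.
case: k hk => [//|k] _; rewrite subn1 /=.
have dA := HAd p Up; have dmu := Hmud p Up.
have Hmu : DP p v mu1 ('D_v mu1 p) by split.
have [df Df] := DP_sigmaInf dA Hmu k.
rewrite (@inner_grad R n g p v _ _ (sigmaInf k (mu1 p) (A p)) (gT p Up) (gpos p Up) df dmu) Df covD_eq tr_comm ?Tinf_comm //.
by rewrite [X in _ = X - _]addrC addrK.
Qed.
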